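(* Let $U_1,\dots,U_n$ be unitary operators on a Hilbert space and let ${\bf U}=U_n U_{n-1}\cdots U_1$. Suppose each $U_i$ is split as $U_i=G_i+B_i$, where $G_i,B_i$ are bounded operators (not necessarily unitary) with $\|B_i\|\le\epsilon$, so that $\|G_i\|\le 1+\epsilon$. Fix an integer $1\le k\le n$. Expanding the product ${\bf U}=\prod_{i}(G_i+B_i)$ into the $2^n$ ordered products, let ${\bf B}$ be the sum of all those products that contain at least $k$ factors of the form $B_i$, and ${\bf G}={\bf U}-{\bf B}$. Then $$\|{\bf B}\|\le \binom{n}{k}\epsilon^k(1+\epsilon)^{n-k}.$$ If moreover every $G_i$ is unitary, then $$\|{\bf B}\|\le \binom{n}{k}\epsilon^k.$$
   Context: $\|\cdot\|$ denotes the operator norm $\|A\|=\max_{\|\psi\|=1}\|A\psi\|$. *)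

(* Defs.v *)
From mathcomp Require Import all_boot all_order all_algebra.
From mathcomp Require Import complex.
From mathcomp Require Import all_classical all_reals.
Import GRing.Theory Num.Theory.
Set Implicit Arguments. Unset Strict Implicit. Unset Printing Implicit Defensive.
Local Open Scope ring_scope.
Local Open Scope complex_scope.

Definition hnorm (R : realType) (V : lmodType R[i]) (inner : V -> V -> R[i]) (x : V) : R :=
  Num.sqrt (complex.Re (inner x x)).

Definition is_hilbert (R : realType) (V : lmodType R[i]) (inner : V -> V -> R[i]) : Prop :=
  [/\ (forall (a : R[i]) (x y z : V), inner (a *: x + y) z = a * inner x z + inner y z),
      (forall x y : V, inner y x = (inner x y)^*%R),
      (forall x : V, 0 <= inner x x),
      (forall x : V, inner x x = 0 -> x = 0) &
      (forall u : nat -> V,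
         (forall e : R, 0 < e -> exists N : nat, forall m n : nat,
             (N <= m)%N -> (N <= n)%N -> hnorm inner (u m - u n) < e) ->
         exists l : V, forall e : R, 0 < e -> exists N : nat, forall n : nat,
             (N <= n)%N -> hnorm inner (u n - l) < e)].

Definition bounded_op (R : realType) (V : lmodType R[i]) (inner : V -> V -> R[i])
  (A : V -> V) : Prop :=
  linear A /\ exists M : R, forall x : V, hnorm inner (A x) <= M * hnorm inner x.

Definition unitary (R : realType) (V : lmodType R[i]) (inner : V -> V -> R[i])
  (A : V -> V) : Prop :=
  [/\ linear A, (forall x y : V, inner (A x) (A y) = inner x y) &
      (forall y : V, exists x : V, A x = y)].

Definition opnorm (R : realType) (V : lmodType R[i]) (inner : V -> V -> R[i])
  (A : V -> V) : R :=
  sup [set hnorm inner (A x) | x in [set x : V | hnorm inner x = 1]]%classic.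

(* ordered product F_{n-1} o ... o F_1 o F_0 (the factor with index 0 acts first) *)
Definition ordprod (V : Type) (n : nat) (F : 'I_n -> V -> V) : V -> V :=
  foldr (fun i acc => acc \o F i) id (enum 'I_n).

(* the sum of those products in prod_i (G_i + B_i) that contain at least k factors B_i;
   S is the set of indices at which the factor B_i is chosen *)
Definition bad_part (K : pzRingType) (V : lmodType K) (n k : nat) (G B : 'I_n -> V -> V)
  : V -> V :=
  fun x => \sum_(S : {set 'I_n} | (k <= #|S|)%N)
             ordprod (fun i => if i \in S then B i else G i) x.

(* Main.v *)
Require Import Defs.
From mathcomp Require Import all_boot all_order all_algebra.
From mathcomp Require Import complex.
From mathcomp Require Import all_classical all_reals.
From mathcomp Require Import ring lra.
Import Order.TTheory GRing.Theory Num.Theory.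
Local Open Scope ring_scope.
Local Open Scope complex_scope.
Set Implicit Arguments. Unset Strict Implicit.

Lemma ip0l (R : realType) (V : lmodType R[i]) (inner : V -> V -> R[i])
  (HV : is_hilbert inner) z : inner 0 z = 0.
Proof.
case: HV => H1 _ _ _ _.
have := H1 (-1) z z z; rewrite scaleN1r addNr mulN1r addNr //.
Qed.

Lemma ipZ (R : realType) (V : lmodType R[i]) (inner : V -> V -> R[i])
  (HV : is_hilbert inner) a x z : inner (a *: x) z = a * inner x z.
Proof.
have := ip0l HV z; case: HV => H1 _ _ _ _ H0.
by have := H1 a x 0 z; rewrite addr0 H0 addr0.
Qed.

Lemma ipD (R : realType) (V : lmodType R[i]) (inner : V -> V -> R[i])
  (HV : is_hilbert inner) x y z : inner (x + y) z = inner x z + inner y z.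
Proof.
case: HV => H1 _ _ _ _.
by have := H1 1 x y z; rewrite scale1r mul1r.
Qed.

Lemma ip_expand (R : realType) (V : lmodType R[i]) (inner : V -> V -> R[i])
  (HV : is_hilbert inner) (p q : R) x y :
  complex.Re (inner (p%:C *: x + q%:C *: y) (p%:C *: x + q%:C *: y)) =
  p ^+ 2 * complex.Re (inner x x) + 2%:R * p * q * complex.Re (inner x y)
  + q ^+ 2 * complex.Re (inner y y).
Proof.
have HD := ipD HV; have HZ := ipZ HV.
case: HV => _ H2 _ _ _.
set w := (p%:C *: x + q%:C *: y).
rewrite HD !HZ (H2 w x) (H2 w y) /w !HD !HZ (H2 x y).
case: (inner x x) => a1 b1; case: (inner x y) => a2 b2; case: (inner y y) => a4 b4.
rewrite /=. ring.
Qed.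

Lemma Re_ge0 (R : realType) (V : lmodType R[i]) (inner : V -> V -> R[i])
  (HV : is_hilbert inner) x : 0 <= complex.Re (inner x x).
Proof. case: HV => _ _ H3 _ _; by move: (H3 x); rewrite lecE => /andP[]. Qed.

Lemma hn_ge0 (R : realType) (V : lmodType R[i]) (inner : V -> V -> R[i]) x :
  0 <= hnorm inner x.
Proof. exact: sqrtr_ge0. Qed.

Lemma hn_sq (R : realType) (V : lmodType R[i]) (inner : V -> V -> R[i])
  (HV : is_hilbert inner) x : hnorm inner x ^+ 2 = complex.Re (inner x x).
Proof. by rewrite /hnorm sqr_sqrtr // (Re_ge0 HV). Qed.

Lemma hn_eq0 (R : realType) (V : lmodType R[i]) (inner : V -> V -> R[i])
  (HV : is_hilbert inner) x : hnorm inner x = 0 -> x = 0.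
Proof.
move=> h; have h2 := Re_ge0 HV x; case: HV => _ _ H3 H4 _.
apply: H4; move: h => /eqP; rewrite /hnorm sqrtr_eq0 => h1.
have e : complex.Re (inner x x) = 0 by by apply: le_anti; rewrite h1 h2.
move: (H3 x); rewrite lecE => /andP[/eqP hi _].
move: e hi; case: (inner x x) => a b /= -> hb. by rewrite hb.
Qed.

Lemma ip0r (R : realType) (V : lmodType R[i]) (inner : V -> V -> R[i])
  (HV : is_hilbert inner) z : inner z 0 = 0.
Proof. have := ip0l HV z; case: HV => _ H2 _ _ _ H0. by rewrite H2 H0 conjC0. Qed.

Lemma hnZ (R : realType) (V : lmodType R[i]) (inner : V -> V -> R[i])
  (HV : is_hilbert inner) (p : R) x : hnorm inner (p%:C *: x) = `|p| * hnorm inner x.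
Proof.
rewrite /hnorm; have := ip_expand HV p 0 x x; rewrite scale0r addr0 => ->.
rewrite expr0n /= mul0r mulr0 mul0r !addr0.
rewrite sqrtrM ?sqr_ge0 // sqrtr_sqr. reflexivity.
Qed.

Lemma hnN (R : realType) (V : lmodType R[i]) (inner : V -> V -> R[i])
  (HV : is_hilbert inner) x : hnorm inner (- x) = hnorm inner x.
Proof.
have e : (-1)%:C = -1 :> R[i] by rewrite /GRing.opp /= oppr0.
have -> : - x = (-1)%:C *: x by rewrite e scaleN1r.
by rewrite hnZ // normrN normr1 mul1r.
Qed.

Lemma CS (R : realType) (V : lmodType R[i]) (inner : V -> V -> R[i])
  (HV : is_hilbert inner) x y :
  complex.Re (inner x y) <= hnorm inner x * hnorm inner y.
Proof.
set a := complex.Re (inner x x); set b := complex.Re (inner y y).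
set r := complex.Re (inner x y).
have ha : 0 <= a := Re_ge0 HV x. have hb : 0 <= b := Re_ge0 HV y.
have key : r ^+ 2 <= a * b.
  have [b0|bpos] := eqVneq b 0.
    have y0 : y = 0 by apply: (hn_eq0 HV); rewrite /hnorm -/b b0 sqrtr0.
    by rewrite /r y0 ip0r // /= expr0n /= mulr_ge0.
  have h := Re_ge0 HV (b%:C *: x + (- r)%:C *: y).
  rewrite ip_expand // -/a -/b -/r in h.
  have bp : 0 < b by rewrite lt_def bpos hb.
  have : 0 <= b * (a * b - r ^+ 2) 
    by rewrite (_ : b * (a * b - r ^+ 2) = b ^+ 2 * a + 2%:R * b * - r * r + (- r) ^+ 2 * b) //; ring.
  by rewrite pmulr_rge0 // subr_ge0.
have : `|r| <= hnorm inner x * hnorm inner y.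
  by rewrite /hnorm -sqrtrM // -sqrtr_sqr ler_sqrt // mulr_ge0.
by apply: le_trans; exact: ler_norm.
Qed.

Lemma hn_tri (R : realType) (V : lmodType R[i]) (inner : V -> V -> R[i])
  (HV : is_hilbert inner) x y :
  hnorm inner (x + y) <= hnorm inner x + hnorm inner y.
Proof.
have e := ip_expand HV 1 1 x y; rewrite !scale1r in e.
have hc := CS HV x y.
rewrite {1}/hnorm e -(ger0_norm (addr_ge0 (hn_ge0 inner x) (hn_ge0 inner y))) -sqrtr_sqr.
rewrite ler_sqrt ?sqr_ge0 // -!(hn_sq HV).
have := hn_ge0 inner x; have := hn_ge0 inner y.
set u := hnorm inner x; set v := hnorm inner y; move: hc; rewrite -/u -/v.
move=> hc _ _. nra.
Qed.

Lemma ordprod0 (V : Type) (F : 'I_0 -> V -> V) x : ordprod F x = x.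
Proof. by rewrite /ordprod (size0nil (size_enum_ord 0)). Qed.

Lemma ordprodS (V : Type) n (F : 'I_n.+1 -> V -> V) x :
  ordprod F x = ordprod (fun i => F (lift ord0 i)) (F ord0 x).
Proof. by rewrite /ordprod enum_ordSl /= foldr_map. Qed.

Lemma ordprod_ext (V : Type) n (F F' : 'I_n -> V -> V) x :
  (forall i y, F i y = F' i y) -> ordprod F x = ordprod F' x.
Proof.
move=> h; rewrite /ordprod; elim: (enum 'I_n) x => [|i s IH] x //=.
by rewrite h IH.
Qed.

Lemma mem_lift_imset n (S : {set 'I_n}) i :
  (lift ord0 i \in [set lift ord0 x | x in S]) = (i \in S).
Proof. by rewrite mem_imset //; exact: lift_inj. Qed.

Lemma ord0_notin_lift n (S : {set 'I_n}) :
  (ord0 \in [set lift ord0 x | x in S]) = false.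
Proof.
apply/negbTE/imsetP => -[y _ /eqP]; by rewrite (negbTE (neq_lift _ _)).
Qed.

Lemma lift0_neq n (i : 'I_n) : (lift ord0 i == ord0) = false.
Proof. by apply/negbTE; rewrite eq_sym neq_lift. Qed.

Lemma bad_split (K : pzRingType) (V : lmodType K) n j (G B : 'I_n.+1 -> V -> V) x :
  bad_part j G B x =
  bad_part j (fun i => G (lift ord0 i)) (fun i => B (lift ord0 i)) (G ord0 x) +
  bad_part j.-1 (fun i => G (lift ord0 i)) (fun i => B (lift ord0 i)) (B ord0 x).
Proof.
rewrite /bad_part /= [LHS](bigID (fun S : {set 'I_n.+1} => ord0 \in S)) /= addrC.
congr (_ + _).
- rewrite (reindex_onto (fun S : {set 'I_n} => [set lift ord0 x | x in S])
                        (fun S => [set i | lift ord0 i \in S])) /=; last first.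
    move=> S /andP[_ hS]; apply/setP => y; case: (unliftP ord0 y) => [i ->|->].
      by rewrite mem_lift_imset inE.
    by rewrite ord0_notin_lift (negbTE hS).
  apply: eq_big => S.
    rewrite ord0_notin_lift card_imset; last exact: lift_inj.
    have -> : [set i | lift ord0 i \in [set lift ord0 x | x in S]] = S.
      by apply/setP => i; rewrite inE mem_lift_imset.
    by rewrite eqxx /= !andbT.
  move=> _; rewrite ordprodS ord0_notin_lift; apply: ordprod_ext => i y.
  by rewrite mem_lift_imset.
- rewrite (reindex_onto (fun S : {set 'I_n} => ord0 |: [set lift ord0 x | x in S])
                        (fun S => [set i | lift ord0 i \in S])) /=; last first.
    move=> S /andP[_ hS]; apply/setP => y; case: (unliftP ord0 y) => [i ->|->].
      by rewrite !inE mem_lift_imset inE.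
    by rewrite !inE eqxx.
  apply: eq_big => S.
    rewrite !inE eqxx /= cardsU1 ord0_notin_lift card_imset; last exact: lift_inj.
    have -> : [set i | lift ord0 i \in ord0 |: [set lift ord0 x | x in S]] = S.
      by apply/setP => i; rewrite !inE mem_lift_imset lift0_neq.
    by rewrite eqxx andbT add1n andbT; case: j.
  move=> _; rewrite ordprodS !inE eqxx /=; apply: ordprod_ext => i y.
  by rewrite !inE mem_lift_imset lift0_neq.
Qed.

Lemma ordprod_add (K : pzRingType) (V : lmodType K) n (U : 'I_n -> V -> V) :
  (forall i y z, U i (y + z) = U i y + U i z) ->
  forall y z, ordprod U (y + z) = ordprod U y + ordprod U z.
Proof.
elim: n U => [|n IH] U hU y z; first by rewrite !ordprod0.
by rewrite !ordprodS hU IH // => i; apply: hU.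
Qed.

Lemma ordprod_norm (R : realType) (V : lmodType R[i]) (inner : V -> V -> R[i])
  n (U : 'I_n -> V -> V) :
  (forall i y, hnorm inner (U i y) = hnorm inner y) ->
  forall x, hnorm inner (ordprod U x) = hnorm inner x.
Proof.
elim: n U => [|n IH] U hU x; first by rewrite ordprod0.
by rewrite ordprodS IH ?hU // => i; apply: hU.
Qed.

Lemma bad_nil (K : pzRingType) (V : lmodType K) j (G B : 'I_0 -> V -> V) x :
  bad_part j G B x = if j == 0%N then x else 0.
Proof.
have S0 : forall S : {set 'I_0}, S = finset.set0 by move=> S; apply/setP => -[].
rewrite /bad_part /=; case: j => [|j] /=.
  rewrite (big_pred1 finset.set0) ?ordprod0 // => S; by rewrite /= (S0 S) eqxx.
by rewrite big_pred0 // => S; rewrite (S0 S) cards0.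
Qed.

Lemma bad0 (K : pzRingType) (V : lmodType K) n (U G B : 'I_n -> V -> V) :
  (forall i y, U i y = G i y + B i y) ->
  (forall i y z, U i (y + z) = U i y + U i z) ->
  forall x, bad_part 0 G B x = ordprod U x.
Proof.
elim: n U G B => [|n IH] U G B hUGB hU x.
  by rewrite bad_nil ordprod0.
have IH' := IH (fun i => U (lift ord0 i)) (fun i => G (lift ord0 i)) (fun i => B (lift ord0 i)).
rewrite bad_split /= !IH' ?ordprodS -?ordprod_add ?hUGB // => *; by rewrite ?hUGB ?hU.
Qed.

Lemma hn0 (R : realType) (V : lmodType R[i]) (inner : V -> V -> R[i])
  (HV : is_hilbert inner) : hnorm inner 0 = 0.
Proof. by rewrite /hnorm (ip0l HV) /= sqrtr0. Qed.

Lemma coef_rec (R : realType) (n j : nat) (c e : R) :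
  'C(n.+1, j.+1)%:R * e ^+ j.+1 * c ^+ (n.+1 - j.+1) =
  'C(n, j.+1)%:R * e ^+ j.+1 * c ^+ (n - j.+1) * c +
  'C(n, j)%:R * e ^+ j * c ^+ (n - j) * e.
Proof.
rewrite binS natrD subSS.
have [lt|le] := ltnP j n.
  rewrite -(subnSK lt) !exprS; ring.
have b0 : 'C(n, j.+1) = 0%N by apply: bin_small; rewrite ltnS.
by rewrite b0 !mul0r add0r exprS; ring.
Qed.

Lemma bound_main (R : realType) (V : lmodType R[i]) (inner : V -> V -> R[i])
  (HV : is_hilbert inner) n (U G B : 'I_n -> V -> V) (c e : R) :
  1 <= c -> 0 <= e ->
  (forall i y, hnorm inner (G i y) <= c * hnorm inner y) ->
  (forall i y, hnorm inner (B i y) <= e * hnorm inner y) ->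
  (forall i y, U i y = G i y + B i y) ->
  (forall i y z, U i (y + z) = U i y + U i z) ->
  (forall i y, hnorm inner (U i y) = hnorm inner y) ->
  forall j x, hnorm inner (bad_part j G B x) <=
              'C(n, j)%:R * e ^+ j * c ^+ (n - j) * hnorm inner x.
Proof.
move=> c1 e0.
have c0 : 0 <= c by apply: le_trans c1.
elim: n U G B => [|n IH] U G B hG hB hUGB hUadd hUn [|j] x.
- by rewrite bad_nil /= bin0 subn0 !expr0 !mul1r.
- by rewrite bad_nil /= (hn0 HV) mulr_ge0 ?hn_ge0 // !mulr_ge0 // exprn_ge0.
- rewrite (bad0 hUGB hUadd) (ordprod_norm hUn) bin0 subn0 expr0 !mul1r.
  by rewrite ler_peMl ?hn_ge0 // exprn_ege1.
have IH' := IH (fun i => U (lift ord0 i)) (fun i => G (lift ord0 i)) (fun i => B (lift ord0 i))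
  (fun i => hG _) (fun i => hB _) (fun i => hUGB _) (fun i => hUadd _) (fun i => hUn _).
rewrite bad_split /=; apply: le_trans (hn_tri HV _ _) _.
rewrite coef_rec mulrDl.
have a1 : 0 <= 'C(n, j.+1)%:R * e ^+ j.+1 * c ^+ (n - j.+1) by rewrite !mulr_ge0 // exprn_ge0.
have a2 : 0 <= 'C(n, j)%:R * e ^+ j * c ^+ (n - j) by rewrite !mulr_ge0 // exprn_ge0.
apply: lerD.
  apply: le_trans (IH' _ _) _; rewrite -[X in _ <= X]mulrA; apply: ler_wpM2l => //; exact: hG.
apply: le_trans (IH' _ _) _; rewrite -[X in _ <= X]mulrA; apply: ler_wpM2l => //; exact: hB.
Qed.

Lemma opnorm_le (R : realType) (V : lmodType R[i]) (inner : V -> V -> R[i])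
  (A : V -> V) (M : R) : 0 <= M ->
  (forall x, hnorm inner (A x) <= M * hnorm inner x) -> opnorm inner A <= M.
Proof.
move=> M0 hA; rewrite /opnorm.
case: (pselect (exists x, hnorm inner x = 1)) => [[x0 hx0]|nx].
  apply: ge_sup; first by exists (hnorm inner (A x0)), x0.
  by move=> _ [x /= hx <-]; have := hA x; rewrite hx mulr1.
rewrite (_ : [set _ | x in _]%classic = set0) ?sup0 //.
apply/seteqP; split => z // [x hx _]; exfalso; apply: nx; by exists x.
Qed.

Lemma lin0 (R : realType) (V : lmodType R[i]) (A : V -> V) :
  linear A -> A 0 = 0.
Proof. move=> lA; have := lA (-1) 0 0; rewrite scaleN1r addNr => ->.
by rewrite scaleN1r addNr. Qed.

Lemma linZ (R : realType) (V : lmodType R[i]) (A : V -> V) a y :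
  linear A -> A (a *: y) = a *: A y.
Proof. move=> lA; have := lA a y 0; by rewrite !addr0 (lin0 lA) addr0. Qed.

Lemma opnorm_bound (R : realType) (V : lmodType R[i]) (inner : V -> V -> R[i])
  (HV : is_hilbert inner) (A : V -> V) :
  bounded_op inner A -> forall y, hnorm inner (A y) <= opnorm inner A * hnorm inner y.
Proof.
case=> lA [M hM] y.
have [s0|sn0] := eqVneq (hnorm inner y) 0.
  by rewrite (hn_eq0 HV s0) (lin0 lA) (hn0 HV) mulr0.
set s := hnorm inner y in sn0 *.
have sp : 0 < s by rewrite lt_def sn0 hn_ge0.
set z := (s^-1)%:C *: y.
have hz : hnorm inner z = 1.
  by rewrite /z hnZ // ger0_norm ?invr_ge0 ?ltW // mulVf.
have hAz : hnorm inner (A z) = s^-1 * hnorm inner (A y).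
  by rewrite /z linZ // hnZ // ger0_norm // invr_ge0 ltW.
have : hnorm inner (A z) <= opnorm inner A.
  apply: ub_le_sup; last by exists z.
  exists M => _ [x /= hx <-]; by have := hM x; rewrite hx mulr1.
rewrite hAz => h; have := ler_wpM2l (ltW sp) h; by rewrite mulrA mulfV // mul1r mulrC.
Qed.

Unset Implicit Arguments. Set Strict Implicit.
Local Close Scope complex_scope.

Theorem lemma1 (R : realType) (V : lmodType R[i]) (inner : V -> V -> R[i])
  (HV : is_hilbert inner) (n k : nat) (U G B : 'I_n -> V -> V) (eps : R) :
  0 <= eps ->
  (1 <= k)%N -> (k <= n)%N ->
  (forall i, unitary inner (U i)) ->
  (forall i, bounded_op inner (G i)) ->
  (forall i, bounded_op inner (B i)) ->
  (forall i x, U i x = G i x + B i x) ->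
  (forall i, opnorm inner (B i) <= eps) ->
  opnorm inner (bad_part k G B) <= 'C(n, k)%:R * eps ^+ k * (1 + eps) ^+ (n - k)
  /\ ((forall i, unitary inner (G i)) ->
      opnorm inner (bad_part k G B) <= 'C(n, k)%:R * eps ^+ k).
Proof.
move=> e0 k1 kn hU hG hB hUGB hBn.
have hUadd : forall i y z, U i (y + z) = U i y + U i z.
  move=> i y z; case: (hU i) => lU _ _; by have := lU 1 y z; rewrite !scale1r.
have hUn : forall i y, hnorm inner (U i y) = hnorm inner y.
  by move=> i y; case: (hU i) => _ hp _; rewrite /hnorm hp.
have hBb : forall i y, hnorm inner (B i y) <= eps * hnorm inner y.
  move=> i y; apply: le_trans (opnorm_bound HV (hB i) y) _.
  by apply: ler_wpM2r; [exact: hn_ge0 | exact: hBn].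
split.
  apply: opnorm_le; first by rewrite !mulr_ge0 // exprn_ge0 // addr_ge0.
  apply: (bound_main HV (U := U)) => //.
  - by rewrite lerDl.
  - move=> i y; have -> : G i y = U i y + - B i y by rewrite hUGB addrK.
    apply: le_trans (hn_tri HV _ _) _; rewrite hnN // hUn mulrDl mul1r.
    by apply: lerD => //; exact: hBb.
move=> hGu.
suff : opnorm inner (bad_part k G B) <= 'C(n, k)%:R * eps ^+ k * 1 ^+ (n - k).
  by rewrite expr1n mulr1.
apply: opnorm_le; first by rewrite expr1n mulr1 mulr_ge0 // exprn_ge0.
apply: (bound_main HV (U := U)) => //.
move=> i y; case: (hGu i) => _ hp _; by rewrite mul1r /hnorm hp.
Qed.
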